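(* Let $n\ge1$ and $\alpha,\beta,u,v\in V_n$. If the Wang tile $(\alpha,\beta,u,v)$ (right $\alpha$, top $\beta$, left $u$, bottom $v$) belongs to $\mathcal T'_n$, then there exists a unique valid rectangular pattern with tiles in $\mathcal T'_n$ whose right, top, left and bottom labels are respectively $\tau_n(\alpha)$, $\tau_n(\beta)$, $\tau_n(u)$ and $\tau_n(v)$.
   Context: Write $\bar m=m+1$. $V_n=\{(v_0,v_1,v_2)\in\mathbb{Z}^3: 0\le v_0\le v_1\le 1,\ v_1\le v_2\le n+1\}$, elements written as words $v_0v_1v_2$. A Wang tile is $t=(a,b,c,d)$ with $\mathrm{RIGHT}(t)=a$, $\mathrm{TOP}(t)=b$, $\mathrm{LEFT}(t)=c$, $\mathrm{BOTTOM}(t)=d$; $\hat t=(b,a,d,c)$, $\hat S=\{\hat t:t\in S\}$. Define (as (right, top, left, bottom)): $W_n=\{(11(i+1),11(j+1),11i,11j):1\le i,j\le n\}$; $B'_n=\{(00(i+1),111,00i,11n):0\le i\le n\}$; $G_n=\{(01(i+1),111,00i,11(n+1)):0\le i\le n\}$; $Y_n=\{(01(i+1),112,01i,11(n+1)):1\le i\le n\}$; $A_n=\{(00(i+1),112,01i,11n):1\le i\le n\}$; $J'_n=\{((0,k,l),(0,r,s),(0,s,r+n),(0,l,k+n)):(k,l),(r,s)\in\{(0,0),(0,1),(1,1)\}\}$. $\mathcal T'_n=W_n\cup B'_n\cup G_n\cup Y_n\cup A_n\cup\hat B'_n\cup\hat G_n\cup\hat Y_n\cup\hat A_n\cup J'_n$.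 A rectangular pattern is valid if adjacent tiles agree on common edges; its bottom (top) labels are those of its bottom (top) row read left to right, its left (right) labels those of its left (right) column read bottom to top. $\tau_n:V_n\to V_n^*$ is $\tau_n(xyz)=(0,x-y+1,n)\cdot(11n)^{z-x-1}\cdot(11\bar n)^{n+1-z}$ if $x\ne z$, and $\tau_n(xyz)=(0,x-y+1,n+1)\cdot(11\bar n)^{n-z}$ if $x=z$. *)

(* Defs.v *)
From mathcomp Require Import all_boot.
Set Implicit Arguments. Unset Strict Implicit. Unset Printing Implicit Defensive.

(* A label v0v1v2 in Z^3; all labels in V_n are nonnegative, so we use nat. *)
Definition label : Type := (nat * nat * nat)%type.
Definition lab (a b c : nat) : label := (a, b, c).

Definition inV (n : nat) (l : label) : Prop :=
  let: (v0, v1, v2) := l in [/\ v0 <= v1, v1 <= 1, v1 <= v2 & v2 <= n.+1].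

Definition tile : Type := (label * label * label * label)%type.
Definition RIGHT (t : tile) : label := t.1.1.1.
Definition TOP (t : tile) : label := t.1.1.2.
Definition LEFT (t : tile) : label := t.1.2.
Definition BOTTOM (t : tile) : label := t.2.
Definition mktile (a b c d : label) : tile := (a, b, c, d).

Definition hat (t : tile) : tile := mktile (TOP t) (RIGHT t) (BOTTOM t) (LEFT t).

Definition inW (n : nat) (t : tile) : Prop :=
  exists i j, [/\ 1 <= i <= n, 1 <= j <= n &
    t = mktile (lab 1 1 i.+1) (lab 1 1 j.+1) (lab 1 1 i) (lab 1 1 j)].
Definition inB' (n : nat) (t : tile) : Prop :=
  exists i, i <= n /\ t = mktile (lab 0 0 i.+1) (lab 1 1 1) (lab 0 0 i) (lab 1 1 n).
Definition inG (n : nat) (t : tile) : Prop :=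
  exists i, i <= n /\ t = mktile (lab 0 1 i.+1) (lab 1 1 1) (lab 0 0 i) (lab 1 1 n.+1).
Definition inY (n : nat) (t : tile) : Prop :=
  exists i, 1 <= i <= n /\ t = mktile (lab 0 1 i.+1) (lab 1 1 2) (lab 0 1 i) (lab 1 1 n.+1).
Definition inA (n : nat) (t : tile) : Prop :=
  exists i, 1 <= i <= n /\ t = mktile (lab 0 0 i.+1) (lab 1 1 2) (lab 0 1 i) (lab 1 1 n).

Definition okpair (k l : nat) : Prop :=
  (k, l) = (0, 0) \/ (k, l) = (0, 1) \/ (k, l) = (1, 1).
Definition inJ' (n : nat) (t : tile) : Prop :=
  exists k l r s, [/\ okpair k l, okpair r s &
    t = mktile (lab 0 k l) (lab 0 r s) (lab 0 s (r + n)) (lab 0 l (k + n))].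

Definition inHat (S : tile -> Prop) (t : tile) : Prop := exists t', S t' /\ t = hat t'.

Definition inT' (n : nat) (t : tile) : Prop :=
  inW n t \/ inB' n t \/ inG n t \/ inY n t \/ inA n t \/
  inHat (inB' n) t \/ inHat (inG n) t \/ inHat (inY n) t \/ inHat (inA n) t \/
  inJ' n t.

(* tau_n : V_n -> V_n^*.  For labels in V_n we have x <= y <= x+1 and x <= z,
   so the natural-number expressions 1 + x - y, z - x - 1, n + 1 - z, n - z
   agree with the integer ones. *)
Definition tau (n : nat) (l : label) : seq label :=
  let: (x, y, z) := l in
  if x != z then
    lab 0 (1 + x - y) n :: nseq (z - x - 1) (lab 1 1 n) ++ nseq (n.+1 - z) (lab 1 1 n.+1)
  else lab 0 (1 + x - y) n.+1 :: nseq (n - z) (lab 1 1 n.+1).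

(* A rectangular pattern of width w and height h: p i j is the tile in
   column i (0 <= i < w, left to right) and row j (0 <= j < h, bottom to top). *)
Definition pattern : Type := nat -> nat -> tile.

Definition valid_pattern (w h : nat) (p : pattern) : Prop :=
  (forall i j, i.+1 < w -> j < h -> RIGHT (p i j) = LEFT (p i.+1 j)) /\
  (forall i j, i < w -> j.+1 < h -> TOP (p i j) = BOTTOM (p i j.+1)).

Definition tiles_in (S : tile -> Prop) (w h : nat) (p : pattern) : Prop :=
  forall i j, i < w -> j < h -> S (p i j).

Definition bottom_labels (w h : nat) (p : pattern) : seq label :=
  [seq BOTTOM (p i 0) | i <- iota 0 w].
Definition top_labels (w h : nat) (p : pattern) : seq label :=
  [seq TOP (p i h.-1) | i <- iota 0 w].
Definition left_labels (w h : nat) (p : pattern) : seq label :=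
  [seq LEFT (p 0 j) | j <- iota 0 h].
Definition right_labels (w h : nat) (p : pattern) : seq label :=
  [seq RIGHT (p w.-1 j) | j <- iota 0 h].

Definition good_pattern (n : nat) (R T L B : seq label) (w h : nat) (p : pattern) : Prop :=
  [/\ valid_pattern w h p, tiles_in (inT' n) w h p,
      right_labels w h p = R, top_labels w h p = T &
      left_labels w h p = L /\ bottom_labels w h p = B].

(* Main.v *)
Require Import Defs.
From mathcomp Require Import all_boot.
From mathcomp Require Import zify.

Definition Tb (z x i : nat) : nat := if z <= i + x then 1 else 0.

Ltac tb_solve :=
  rewrite /Tb /lab;
  repeat match goal with
         | |- context [if ?a <= ?b then _ else _] => case: (leqP a b) => ?
         end;
  try f_equal; lia.

Lemma tau_size n x y z : 0 < n -> x <= 1 -> x <= z -> z <= n.+1 ->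
  size (tau n (x, y, z)) = n.+1 - x.
Proof.
rewrite /tau; case: eqP => [<-|ne] /= *; rewrite ?size_cat !size_nseq; lia.
Qed.

Lemma tau_nth0 n x y z d : x <= z ->
  nth d (tau n (x, y, z)) 0 = lab 0 (1 + x - y) (n + Tb z x 0).
Proof.
rewrite /tau; case: eqP => [<-|ne] /= *; tb_solve.
Qed.

Lemma tau_nthS n x y z d i : 0 < i -> i < n.+1 - x -> x <= z -> z <= n.+1 ->
  nth d (tau n (x, y, z)) i = lab 1 1 (n + Tb z x i).
Proof.
case: i => [|i] //= _ Hi Hxz Hz; rewrite /tau; case: eqP => [Exz|ne] /=.
- rewrite nth_nseq; subst z; tb_solve.
- rewrite nth_cat size_nseq !nth_nseq; tb_solve.
Qed.

Lemma map_iota_eq (f : nat -> label) (s : seq label) m :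
  size s = m -> (forall i, i < m -> f i = nth (lab 0 0 0) s i) ->
  [seq f i | i <- iota 0 m] = s.
Proof.
move=> Hs H; apply: (@eq_from_nth _ (lab 0 0 0)); first by rewrite size_map size_iota.
move=> i; rewrite size_map size_iota => Hi.
by rewrite (nth_map 0) ?size_iota // nth_iota // add0n; apply: H.
Qed.

Lemma row_ok n t t' c : t <= 1 -> t' <= 1 -> c <= n -> (t = 1 -> 1 <= c) ->
  inT' n (mktile (lab 0 t' c.+1) (lab 1 1 t.+1) (lab 0 t c) (lab 1 1 (n + t'))).
Proof.
case: t => [|[|t]] // ; case: t' => [|[|t']] // _ _ Hc H1.
- by right; left; exists c; rewrite addn0.
- by right; right; left; exists c; rewrite addn1.
- by right; right; right; right; left; exists c; rewrite addn0 H1.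
- by right; right; right; left; exists c; rewrite addn1 H1.
Qed.

Lemma col_ok n t t' c : t <= 1 -> t' <= 1 -> c <= n -> (t = 1 -> 1 <= c) ->
  inT' n (mktile (lab 1 1 t.+1) (lab 0 t' c.+1) (lab 1 1 (n + t')) (lab 0 t c)).
Proof.
case: t => [|[|t]] // ; case: t' => [|[|t']] // _ _ Hc H1.
- by do 5 right; left; eexists; split; first (exists c; split; [exact Hc| reflexivity]); rewrite addn0.
- by do 6 right; left; eexists; split; first (exists c; split; [exact Hc| reflexivity]); rewrite addn1.
- by do 8 right; left; eexists; split; first (exists c; split; [rewrite H1 // | reflexivity]); rewrite addn0.
- by do 7 right; left; eexists; split; first (exists c; split; [rewrite H1 // | reflexivity]); rewrite addn1.
Qed.

Lemma W_ok n a b : 1 <= a <= n -> 1 <= b <= n ->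
  inT' n (mktile (lab 1 1 a.+1) (lab 1 1 b.+1) (lab 1 1 a) (lab 1 1 b)).
Proof. by move=> Ha Hb; left; exists a, b. Qed.

Lemma J_ok n k l r s : okpair k l -> okpair r s ->
  inT' n (mktile (lab 0 k l) (lab 0 r s) (lab 0 s (r + n)) (lab 0 l (k + n))).
Proof. by move=> H1 H2; do 9 right; exists k, l, r, s. Qed.

Ltac tb_split :=
  repeat match goal with
  | |- context [if ?a <= ?b then _ else _] => case: (leqP a b) => ?
  | H : context [if ?a <= ?b then _ else _] |- _ => move: H; case: (leqP a b) => ? H
  end.

Lemma lab_eq a b c a' b' c' : a = a' -> b = b' -> c = c' -> lab a b c = lab a' b' c'.
Proof. by move=> -> -> ->. Qed.

Lemma okp x y z : x <= y -> y <= 1 -> y <= z -> okpair (Tb z x 0) (1 + x - y).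
Proof.
move=> h1 h2 h3; rewrite /okpair /Tb.
have : x = 0 \/ x = 1 by lia.
have : y = 0 \/ y = 1 by lia.
case=> Ey; case=> Ex; subst x y; case: leqP => ? /=;
  first [by left | by right; left | by right; right | exfalso; lia].
Qed.

Ltac destT :=
  let H := fresh "H" in intro H;
  destruct H as [(? & ? & [? ? ->])|[(? & ? & ->)|[(? & ? & ->)|[(? & ? & ->)|[(? & ? & ->)|
    [(? & (? & ? & ->) & ->)|[(? & (? & ? & ->) & ->)|[(? & (? & ? & ->) & ->)|[(? & (? & ? & ->) & ->)|
    (? & ? & ? & ? & [? ? ->])]]]]]]]]];
  repeat match goal with
  | H : okpair _ _ |- _ =>
      let E := fresh "E" in let E1 := fresh "E" in let E2 := fresh "E" in
      destruct H as [E|[E|E]]; injection E as E1 E2; subst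
  end.

Lemma det n t1 t2 : inT' n t1 -> inT' n t2 -> LEFT t1 = LEFT t2 -> BOTTOM t1 = BOTTOM t2 -> t1 = t2.
Proof.
destT; destT;
rewrite /LEFT /BOTTOM /hat /mktile /lab /=; move=> E1 E2; try discriminate;
(try injection E1); (try injection E2); intros; subst; try reflexivity; exfalso; lia.
Qed.

Definition pat n u0 u1 u2 v0 v1 v2 : pattern := fun i j =>
  match i, j with
  | 0, 0 => mktile (lab 0 (Tb v2 v0 0) (1 + v0 - v1)) (lab 0 (Tb u2 u0 0) (1 + u0 - u1))
                   (lab 0 (1 + u0 - u1) (Tb u2 u0 0 + n)) (lab 0 (1 + v0 - v1) (Tb v2 v0 0 + n))
  | i'.+1, 0 => mktile (lab 0 (Tb v2 v0 i'.+1) (1 + v0 - v1 + i').+1) (lab 1 1 (Tb v2 v0 i').+1)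
                   (lab 0 (Tb v2 v0 i') (1 + v0 - v1 + i')) (lab 1 1 (n + Tb v2 v0 i'.+1))
  | 0, j'.+1 => mktile (lab 1 1 (Tb u2 u0 j').+1) (lab 0 (Tb u2 u0 j'.+1) (1 + u0 - u1 + j').+1)
                   (lab 1 1 (n + Tb u2 u0 j'.+1)) (lab 0 (Tb u2 u0 j') (1 + u0 - u1 + j'))
  | i'.+1, j'.+1 => mktile (lab 1 1 (Tb u2 u0 j' + i'.+1).+1) (lab 1 1 (Tb v2 v0 i' + j'.+1).+1)
                   (lab 1 1 (Tb u2 u0 j' + i'.+1)) (lab 1 1 (Tb v2 v0 i' + j'.+1))
  end.

Section PatLemmas.
Variables (n u0 u1 u2 v0 v1 v2 : nat).
Let p := pat n u0 u1 u2 v0 v1 v2.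

Lemma R0 i : RIGHT (p i 0) = lab 0 (Tb v2 v0 i) (1 + v0 - v1 + i).
Proof. by case: i => [|i]; rewrite /p /= ?addn0 ?addnS. Qed.
Lemma RS i j : RIGHT (p i j.+1) = lab 1 1 (Tb u2 u0 j + i).+1.
Proof. by case: i => [|i]; rewrite /p /= ?addn0. Qed.
Lemma T0 j : TOP (p 0 j) = lab 0 (Tb u2 u0 j) (1 + u0 - u1 + j).
Proof. by case: j => [|j]; rewrite /p /= ?addn0 ?addnS. Qed.
Lemma TS i j : TOP (p i.+1 j) = lab 1 1 (Tb v2 v0 i + j).+1.
Proof. by case: j => [|j]; rewrite /p /= ?addn0. Qed.
End PatLemmas.

Lemma Tb_le z x i : Tb z x i <= 1.
Proof. by rewrite /Tb; case: ifP. Qed.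

Lemma exist_gen n a0 a1 a2 b0 b1 b2 u0 u1 u2 v0 v1 v2 :
  0 < n -> inV n (a0, a1, a2) -> inV n (b0, b1, b2) -> inV n (u0, u1, u2) -> inV n (v0, v1, v2) ->
  a0 = u0 -> b0 = v0 ->
  Tb v2 v0 (n - v0) = 1 + a0 - a1 ->
  1 + v0 - v1 + (n - v0) = n + Tb a2 a0 0 ->
  (forall j, 0 < j -> j < n.+1 - u0 -> (Tb u2 u0 j.-1 + (n - v0)).+1 = n + Tb a2 a0 j) ->
  Tb u2 u0 (n - u0) = 1 + b0 - b1 ->
  1 + u0 - u1 + (n - u0) = n + Tb b2 b0 0 ->
  (forall i, 0 < i -> i < n.+1 - v0 -> (Tb v2 v0 i.-1 + (n - u0)).+1 = n + Tb b2 b0 i) ->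
  (forall i j, 0 < i -> i < n.+1 - v0 -> 0 < j -> j < n.+1 - u0 ->
     Tb u2 u0 j.-1 + i <= n /\ Tb v2 v0 i.-1 + j <= n) ->
  good_pattern n (tau n (a0, a1, a2)) (tau n (b0, b1, b2)) (tau n (u0, u1, u2)) (tau n (v0, v1, v2))
    (n.+1 - v0) (n.+1 - u0) (pat n u0 u1 u2 v0 v1 v2).
Proof.
rewrite /inV => n0 [a01 a11 a12 a2n] [b01 b11 b12 b2n] [u01 u11 u12 u2n] [v01 v11 v12 v2n].
move=> Ea Eb HR0a HR0b HRj HT0a HT0b HTi HI; subst a0 b0.
split.
- split.
  + move=> [|i] [|j] Hi Hj; rewrite /pat /RIGHT /LEFT /=; apply: lab_eq; lia.
  + move=> [|i] [|j] Hi Hj; rewrite /pat /TOP /BOTTOM /=; apply: lab_eq; lia.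
- move=> [|i] [|j] Hi Hj; rewrite /pat.
  + by apply: J_ok; apply: okp.
  + apply: col_ok; [exact: Tb_le | exact: Tb_le | lia | ].
    by rewrite /Tb; case: ifP => // ? _; lia.
  + apply: row_ok; [exact: Tb_le | exact: Tb_le | lia | ].
    by rewrite /Tb; case: ifP => // ? _; lia.
  + have [h1 h2] := HI i.+1 j.+1 isT Hi isT Hj.
    apply: W_ok; rewrite /= in h1 h2; lia.
- rewrite /right_labels; apply: map_iota_eq; first by rewrite tau_size //; lia.
  have -> : (n.+1 - v0).-1 = n - v0 by lia.
  move=> [|j] Hj.
  + rewrite R0 tau_nth0; [apply: lab_eq; lia | lia].
  + rewrite RS tau_nthS; [ | lia..]; have := HRj j.+1 isT Hj; rewrite /=; move=> h; apply: lab_eq; lia.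
- rewrite /top_labels; apply: map_iota_eq; first by rewrite tau_size //; lia.
  have -> : (n.+1 - u0).-1 = n - u0 by lia.
  move=> [|i] Hi.
  + rewrite T0 tau_nth0; [apply: lab_eq; lia | lia].
  + rewrite TS tau_nthS; [ | lia..]; have := HTi i.+1 isT Hi; rewrite /=; move=> h; apply: lab_eq; lia.
- split.
  + rewrite /left_labels; apply: map_iota_eq; first by rewrite tau_size //; lia.
    move=> [|j] Hj; first by rewrite tau_nth0 /pat /LEFT /=; [apply: lab_eq; lia | lia].
    by rewrite tau_nthS /pat /LEFT //; lia.
  + rewrite /bottom_labels; apply: map_iota_eq; first by rewrite tau_size //; lia.
    move=> [|i] Hi; first by rewrite tau_nth0 /pat /BOTTOM /=; [apply: lab_eq; lia | lia].
    by rewrite tau_nthS /pat /BOTTOM //; lia.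
Qed.

Lemma map_nth_eq (f g : nat -> label) m k :
  [seq f i | i <- iota 0 m] = [seq g i | i <- iota 0 m] -> k < m -> f k = g k.
Proof.
move=> E Hk; have := congr1 (fun s => nth (lab 0 0 0) s k) E.
by rewrite /= !(nth_map 0) ?size_iota // nth_iota // add0n.
Qed.

Lemma uniq_gen n R T L B w h p w' h' p' :
  good_pattern n R T L B w h p -> good_pattern n R T L B w' h' p' ->
  [/\ w' = w, h' = h & forall i j, i < w -> j < h -> p' i j = p i j].
Proof.
case=> [[vr vt] tin rl tl [ll bl]] [[vr' vt'] tin' rl' tl' [ll' bl']].
have Ew : w' = w.
  by have := congr1 size (etrans bl' (esym bl)); rewrite /bottom_labels !size_map !size_iota.
have Eh : h' = h.
  by have := congr1 size (etrans ll' (esym ll)); rewrite /left_labels !size_map !size_iota.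
subst w' h'; split => //.
suff H : forall j, j < h -> forall i, i < w -> p' i j = p i j by move=> i j hi hj; apply: H.
elim=> [|j IHj] Hj; elim=> [|i IHi] Hi; apply: (@det n _ _ (tin' _ _ Hi Hj) (tin _ _ Hi Hj)).
- exact: (@map_nth_eq _ _ _ _ (etrans ll' (esym ll))).
- exact: (@map_nth_eq _ _ _ _ (etrans bl' (esym bl))).
- by rewrite -(vr' i 0) // -(vr i 0) // IHi // ltnW.
- exact: (@map_nth_eq _ _ _ _ (etrans bl' (esym bl))).
- exact: (@map_nth_eq _ _ _ _ (etrans ll' (esym ll))).
- by rewrite -(vt' 0 j) // -(vt 0 j) // IHj // ltnW.
- by rewrite -(vr' i j.+1) // -(vr i j.+1) // IHi // ltnW.
- by rewrite -(vt' i.+1 j) // -(vt i.+1 j) // IHj // ltnW.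
Qed.

Ltac solve_cond := intros; try split; rewrite /Tb; tb_split; lia.

Theorem lemma5p3 (n : nat) (alpha beta u v : label) :
  1 <= n ->
  inV n alpha -> inV n beta -> inV n u -> inV n v ->
  inT' n (mktile alpha beta u v) ->
  exists w h (p : pattern),
    good_pattern n (tau n alpha) (tau n beta) (tau n u) (tau n v) w h p /\
    (forall w' h' (p' : pattern),
       good_pattern n (tau n alpha) (tau n beta) (tau n u) (tau n v) w' h' p' ->
       [/\ w' = w, h' = h &
           forall i j, i < w -> j < h -> p' i j = p i j]).
Proof.
move=> n1; case: alpha => [[a0 a1] a2]; case: beta => [[b0 b1] b2].
case: u => [[u0 u1] u2]; case: v => [[v0 v1] v2] => HA HB HU HV Hin.
suff G : good_pattern n (tau n (a0, a1, a2)) (tau n (b0, b1, b2)) (tau n (u0, u1, u2))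
    (tau n (v0, v1, v2)) (n.+1 - v0) (n.+1 - u0) (pat n u0 u1 u2 v0 v1 v2).
  exists (n.+1 - v0), (n.+1 - u0), (pat n u0 u1 u2 v0 v1 v2); split; first exact: G.
  by move=> w' h' p' G'; exact: uniq_gen G G'.
move: Hin.
destruct 1 as [(? & ? & [? ? E])|[(? & ? & E)|[(? & ? & E)|[(? & ? & E)|[(? & ? & E)|
    [(? & (? & ? & ->) & E)|[(? & (? & ? & ->) & E)|[(? & (? & ? & ->) & E)|[(? & (? & ? & ->) & E)|
    (? & ? & ? & ? & [? ? E])]]]]]]]]];
  repeat match goal with
  | H : okpair _ _ |- _ =>
      let E := fresh "E" in let E1 := fresh "E" in let E2 := fresh "E" in
      destruct H as [E|[E|E]]; injection E as E1 E2; subst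
  end;
  rewrite /hat /mktile /lab /= in E; injection E; intros; subst;
  (apply: exist_gen => //; solve_cond).
Qed.
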